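(* Suppose $X \in M_m^{S}\otimes M_n^{S}$ and let $B \in M_m\otimes M_n$ be any matrix with $X = \tfrac14\big(B + B^T + B^\Gamma + (B^T)^\Gamma\big)$. Then \[ \mu^{\mathbb{C}}_{\min}(X) \ge W^{1+i}_{\min}(B) \quad\text{and}\quad \mu^{\mathbb{C}}_{\max}(X) \le W^{1+i}_{\max}(B). \]
   Context: $M_n$ denotes real $n\times n$ matrices, $M_n^S$ the real symmetric ones, and $M_m\otimes M_n$ is identified with $M_{mn}$ via the Kronecker product; $M_m^S\otimes M_n^S$ is the span of $Y\otimes Z$ with $Y\in M_m^S$, $Z\in M_n^S$ (equivalently, real $X$ with $X = X^T = X^\Gamma$). For $A = \sum_j X_j \otimes Y_j$, the partial transpose is $A^\Gamma = \sum_j X_j \otimes Y_j^T$. $\mu^{\mathbb{C}}_{\min}(X) = \min\{(\mathbf{v}\otimes\mathbf{w})^*X(\mathbf{v}\otimes\mathbf{w}) : \mathbf{v}\in\mathbb{C}^m,\mathbf{w}\in\mathbb{C}^n,\|\mathbf{v}\|=\|\mathbf{w}\|=1\}$ and $\mu^{\mathbb{C}}_{\max}(X)$ is the corresponding maximum. The numerical range of $A\in M_N(\mathbb{C})$ is $W(A) = \{\mathbf{x}^*A\mathbf{x} : \mathbf{x}\in\mathbb{C}^N, \|\mathbf{x}\|=1\}$. For real $B$, $W^{1+i}(B) = \{c\in\mathbb{R} : c(1+i)\in W(B+iB^\Gamma)\}$, a nonempty compact interval with minimum $W^{1+i}_{\min}(B)$ and maximum $W^{1+i}_{\max}(B)$.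 *)

(* Defs.v *)
From HB Require Import structures.
From mathcomp Require Import all_boot all_order all_algebra.
From mathcomp Require Import all_classical all_reals.
From mathcomp Require Import complex mxtens.
Set Implicit Arguments. Unset Strict Implicit. Unset Printing Implicit Defensive.
Import Order.TTheory GRing.Theory Num.Theory.
Local Open Scope ring_scope.
Local Open Scope classical_set_scope.

(* M_m (x) M_n is identified with 'M_(m*n) via the Kronecker product
   [A *t B] of mxtens, whose row/column index (i,j) is [mxtens_index (i,j)]. *)

(* Partial transpose: (A^Gamma)_{(i1,i2),(j1,j2)} = A_{(i1,j2),(j1,i2)},
   so that (X *t Y)^Gamma = X *t Y^T, extended linearly. *)
Definition ptrans {T : Type} {m n : nat} (A : 'M[T]_(m * n)) : 'M[T]_(m * n) :=
  \matrix_(p, q)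
    A (mxtens_index ((mxtens_unindex p).1, (mxtens_unindex q).2))
      (mxtens_index ((mxtens_unindex q).1, (mxtens_unindex p).2)).

Definition in_symtens {R : pzRingType} {m n : nat} (X : 'M[R]_(m * n)) : Prop :=
  exists (K : nat) (Y : 'I_K -> 'M[R]_m) (Z : 'I_K -> 'M[R]_n),
    (forall k, (Y k)^T = Y k) /\ (forall k, (Z k)^T = Z k) /\
    X = \sum_(k < K) (Y k *t Z k).

Section Complexified.
Variable R : realType.
Local Notation C := (R[i]).

Definition cmx {p q : nat} (A : 'M[R]_(p, q)) : 'M[C]_(p, q) :=
  map_mx (fun x => x%:C%C) A.

Definition adjmx {p q : nat} (A : 'M[C]_(p, q)) : 'M[C]_(q, p) :=
  (map_mx (@conjc R) A)^T.

Definition qform {N : nat} (A : 'M[C]_N) (x : 'cV[C]_N) : C :=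
  (adjmx x *m A *m x) 0 0.

Definition unit_vec {N : nat} (x : 'cV[C]_N) : Prop :=
  (adjmx x *m x) 0 0 = 1.

Definition numrange {N : nat} (A : 'M[C]_N) : set C :=
  [set z | exists x : 'cV[C]_N, unit_vec x /\ z = qform A x].

Definition W1i {m n : nat} (B : 'M[R]_(m * n)) : set R :=
  [set c | numrange (cmx B + (Complex 0 1) *: cmx (ptrans B))
                    (c%:C%C * (1 + Complex 0 1))].

Definition W1i_min {m n : nat} (B : 'M[R]_(m * n)) : R := inf (W1i B).
Definition W1i_max {m n : nat} (B : 'M[R]_(m * n)) : R := sup (W1i B).

Definition prod_values {m n : nat} (X : 'M[R]_(m * n)) : set R :=
  [set r | exists (v : 'cV[C]_m) (w : 'cV[C]_n),
      unit_vec v /\ unit_vec w /\ qform (cmx X) (v *t w) = r%:C%C].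

Definition muC_min {m n : nat} (X : 'M[R]_(m * n)) : R := inf (prod_values X).
Definition muC_max {m n : nat} (X : 'M[R]_(m * n)) : R := sup (prod_values X).

End Complexified.

(* Main.v *)
Require Import Defs.
From HB Require Import structures.
From mathcomp Require Import all_boot all_order all_algebra.
From mathcomp Require Import all_classical all_reals.
From mathcomp Require Import complex mxtens.
From mathcomp Require Import ring lra.
Import Order.TTheory GRing.Theory Num.Theory.
Local Open Scope ring_scope.
Local Close Scope complex_scope.

Section S.
Variable R : realType.
Local Notation C := (R[i]).

Definition bf {N : nat} (A : 'M[C]_N) (x y : 'cV[C]_N) : C :=
  \sum_i \sum_j (x i 0)^* * A i j * y j 0.

Lemma adjmxE p q (A : 'M[C]_(p,q)) i j : adjmx A i j = (A j i)^*.
Proof. by rewrite /adjmx !mxE. Qed.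

Lemma qformE N (A : 'M[C]_N) x : qform A x = bf A x x.
Proof.
rewrite /qform /bf mxE; under eq_bigr do rewrite mxE mulr_suml.
rewrite exchange_big /=; apply: eq_bigr => i _; apply: eq_bigr => j _.
by rewrite adjmxE.
Qed.

Lemma unit_vecE N (x : 'cV[C]_N) : unit_vec x <-> bf 1%:M x x = 1.
Proof.
rewrite /unit_vec /bf mxE.
have -> : \sum_i \sum_j (x i 0)^* * (1%:M : 'M[C]_N) i j * x j 0 =
          \sum_i (x i 0)^* * x i 0.
  apply: eq_bigr => i _; rewrite (bigD1 i) //= big1 ?addr0.
    by rewrite mxE eqxx mulr1.
  by move=> j /negbTE ji; rewrite mxE eq_sym ji mulr0 mul0r.
under eq_bigr do rewrite adjmxE.
by [].
Qed.

Lemma bfDl N (A : 'M[C]_N) x y z : bf A (x + y) z = bf A x z + bf A y z.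
Proof.
rewrite /bf -big_split; apply: eq_bigr => i _; rewrite -big_split.
by apply: eq_bigr => j _; rewrite mxE rmorphD /= !mulrDl.
Qed.
Lemma bfDr N (A : 'M[C]_N) x y z : bf A z (x + y) = bf A z x + bf A z y.
Proof.
rewrite /bf -big_split; apply: eq_bigr => i _; rewrite -big_split.
by apply: eq_bigr => j _; rewrite mxE !mulrDr.
Qed.
Lemma bfZl N (A : 'M[C]_N) a x z : bf A (a *: x) z = a^* * bf A x z.
Proof.
rewrite /bf mulr_sumr; apply: eq_bigr => i _; rewrite mulr_sumr.
by apply: eq_bigr => j _; rewrite mxE rmorphM /= !mulrA.
Qed.
Lemma bfZr N (A : 'M[C]_N) a x z : bf A z (a *: x) = a * bf A z x.
Proof.
rewrite /bf mulr_sumr; apply: eq_bigr => i _; rewrite mulr_sumr.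
by apply: eq_bigr => j _; rewrite mxE mulrCA.
Qed.
Lemma bfDA N (A B : 'M[C]_N) x z : bf (A + B) x z = bf A x z + bf B x z.
Proof.
rewrite /bf -big_split; apply: eq_bigr => i _; rewrite -big_split.
by apply: eq_bigr => j _; rewrite mxE mulrDr mulrDl.
Qed.
Lemma bfZA N (A : 'M[C]_N) a x z : bf (a *: A) x z = a * bf A x z.
Proof.
rewrite /bf mulr_sumr; apply: eq_bigr => i _; rewrite mulr_sumr.
by apply: eq_bigr => j _; rewrite mxE; ring.
Qed.

Lemma bf1E N (x : 'cV[C]_N) : bf 1%:M x x = \sum_i `|x i 0| ^+ 2.
Proof.
rewrite /bf; apply: eq_bigr => i _; rewrite (bigD1 i) //= big1 ?addr0.
  by rewrite mxE eqxx mulr1 normCKC.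
by move=> j /negbTE ji; rewrite mxE eq_sym ji mulr0 mul0r.
Qed.

Lemma bf1_ge0 N (x : 'cV[C]_N) : 0 <= bf 1%:M x x.
Proof. by rewrite bf1E sumr_ge0 // => i _; rewrite exprn_ge0. Qed.

Lemma bf1_eq0 N (x : 'cV[C]_N) : bf 1%:M x x = 0 -> x = 0.
Proof.
rewrite bf1E => /eqP; rewrite psumr_eq0 => [/allP H|i _]; last by rewrite exprn_ge0.
apply/matrixP => i j; rewrite [j]ord1 mxE.
have /H : i \in index_enum 'I_N by rewrite mem_index_enum.
by rewrite /= expf_eq0 /= normr_eq0 => /eqP.
Qed.


Lemma bf_comb N (A : 'M[C]_N) x y a b :
  bf A (a *: x + b *: y) (a *: x + b *: y) =
  a^* * a * bf A x x + a^* * b * bf A x y + b^* * a * bf A y x + b^* * b * bf A y y.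
Proof. rewrite !bfDl !bfDr !bfZl !bfZr; ring. Qed.

Lemma bf_scale N (A : 'M[C]_N) x a : bf A (a *: x) (a *: x) = a^* * a * bf A x x.
Proof. rewrite !bfZl !bfZr; ring. Qed.

Lemma bf1C N (x y : 'cV[C]_N) : bf 1%:M y x = (bf 1%:M x y)^*.
Proof.
have E (u v : 'cV[C]_N) : bf 1%:M u v = \sum_i (u i 0)^* * v i 0.
  rewrite /bf; apply: eq_bigr => i _; rewrite (bigD1 i) //= big1 ?addr0.
    by rewrite mxE eqxx mulr1.
  by move=> j /negbTE ji; rewrite mxE eq_sym ji mulr0 mul0r.
rewrite !E rmorph_sum; apply: eq_bigr => i _.
by rewrite rmorphM /= conjCK mulrC.
Qed.

Lemma conj_aux (ze u w : C) :
  (ze * u + ze^* * w)^* - (ze * u + ze^* * w) = (ze * (u - w^*))^* - ze * (u - w^*).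
Proof. rewrite !rmorphD /= !rmorphM /= rmorphB /= !conjCK; ring. Qed.

Lemma midpoint {N} (A : 'M[C]_N) x y : bf 1%:M x x = 1 -> bf 1%:M y y = 1 ->
  exists z, bf 1%:M z z = 1 /\ bf A z z = (bf A x x + bf A y y) / 2.
Proof.
move=> ux uy.
set P := bf A x x; set Q := bf A y y.
have [PQ|PQ] := eqVneq P Q.
  by exists x; split => //; rewrite -/P -PQ; field.
have D0 : Q - P != 0 by rewrite subr_eq0 eq_sym.
set M := (P + Q) / 2.
set al := bf A x y; set be := bf A y x; set ga := bf 1%:M x y.
set u := 2 * (al - M * ga) / (Q - P).
set w := 2 * (be - M * ga^*) / (Q - P).
set d := u - w^*.
pose ze := if d == 0 then 1 else d^* / `|d|.
have zeN : ze^* * ze = 1.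
  rewrite /ze; case: eqP => [_|/eqP dn0]; first by rewrite conjC1 mulr1.
  rewrite rmorphM /= conjCK fmorphV /= geC0_conj ?normr_ge0 //.
  by rewrite mulrACA -normCK expr2 -invfM mulfV // mulf_neq0 // normr_eq0.
have zed : (ze * d)^* = ze * d.
  rewrite /ze; case: eqP => [->|/eqP dn0]; first by rewrite mulr0 conjC0.
  rewrite mulrAC -normCKC expr2 mulfK ?normr_eq0 //.
  by rewrite geC0_conj ?normr_ge0.
set g := ze * u + ze^* * w.
have gr : g^* = g.
  apply/eqP; rewrite -subr_eq0; apply/eqP.
  have -> : g^* - g = (ze * d)^* - ze * d by rewrite /g /d conj_aux.
  by rewrite zed subrr.
have g2 : 0 <= g ^+ 2 + 4.
  apply: addr_ge0; last exact: (ler0n _ 4).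
  by rewrite expr2 -{2}gr -normCK exprn_ge0.
set r := sqrtC (g ^+ 2 + 4).
have r2 : r ^+ 2 = g ^+ 2 + 4 by rewrite sqrtCK.
have rr : r^* = r by rewrite geC0_conj // sqrtC_ge0.
set s := (g + r) / 2.
have sr : s^* = s by rewrite /s rmorphM /= rmorphD /= gr rr fmorphV /= conjC_nat.
have sq : s ^+ 2 - g * s - 1 = 0.
  rewrite /s; apply/eqP; rewrite -subr_eq0; apply/eqP.
  have -> : ((g + r) / 2) ^+ 2 - g * ((g + r) / 2) - 1 - 0 =
           (r ^+ 2 - (g ^+ 2 + 4)) / 4 by field.
  by rewrite r2 subrr mul0r.
have s0 : s != 0.
  apply/eqP => s0; move: sq; rewrite s0 expr0n /= mulr0 subrr sub0r => /eqP.
  by rewrite oppr_eq0 oner_eq0.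
set z := s *: x + ze *: y.
have gaC : bf 1%:M y x = ga^* by rewrite bf1C.
have nzE : bf 1%:M z z = s ^+ 2 + s * ze * ga + s * ze^* * ga^* + 1.
  rewrite /z bf_comb ux uy -/ga gaC sr !mulr1 zeN; ring.
have AzE : bf A z z = s ^+ 2 * P + s * ze * al + s * ze^* * be + ze^* * ze * Q.
  rewrite /z bf_comb sr -/P -/Q -/al -/be; ring.
have key : bf A z z = M * bf 1%:M z z.
  rewrite AzE nzE zeN.
  have gE : g = ze * (2 * (al - M * ga) / (Q - P)) + ze^* * (2 * (be - M * ga^*) / (Q - P)) by [].
  have H : s ^+ 2 * P + s * ze * al + s * ze^* * be + 1 * Q -
     M * (s ^+ 2 + s * ze * ga + s * ze^* * ga^* + 1) =
     (Q - P) / 2 * (1 - (s ^+ 2 - g * s)).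
    rewrite gE /M; field; exact: D0.
  apply/eqP; rewrite -subr_eq0 H.
  have -> : s ^+ 2 - g * s = 1 by apply/eqP; rewrite -subr_eq0 sq.
  by rewrite subrr mulr0.
have nz0 : bf 1%:M z z != 0.
  apply/eqP => /bf1_eq0 z0.
  pose k := - ze / s.
  have xk : x = k *: y.
    apply: (scalerI s0); rewrite scalerA /k mulrC divfK // scaleNr.
    by apply/eqP; rewrite -subr_eq0 opprK; apply/eqP; exact: z0.
  have kk : k^* * k = 1 by move: ux; rewrite xk bf_scale uy mulr1.
  by move: PQ; rewrite /P xk bf_scale kk mul1r eqxx.
set nz := bf 1%:M z z.
have nzge : 0 <= nz by apply: bf1_ge0.
set t := (sqrtC nz)^-1.
have tt : t^* * t = nz^-1.
  rewrite geC0_conj ?invr_ge0 ?sqrtC_ge0 // -expr2 /t exprVn sqrtCK //.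
exists (t *: z); split.
  by rewrite bf_scale tt mulVf.
by rewrite bf_scale tt key -/nz mulrCA mulVf // mulr1.
Qed.


Definition cv {p q : nat} (x : 'M[C]_(p, q)) : 'M[C]_(p, q) := map_mx Num.conj_op x.

Lemma sum_tens m n (F : 'I_(m * n) -> C) :
  \sum_p F p = \sum_(i < m) \sum_(j < n) F (mxtens_index (i, j)).
Proof.
rewrite pair_big /= (reindex (@mxtens_index m n)) /=.
  by apply: eq_bigr => -[i j].
by exists (@mxtens_unindex m n) => k _; rewrite (mxtens_indexK, mxtens_unindexK).
Qed.

Lemma tensvE m n (v : 'cV[C]_m) (w : 'cV[C]_n) i j (o : 'I_(1 * 1)) :
  (v *t w) (mxtens_index (i, j)) o = v i 0 * w j 0.
Proof.
rewrite mxE mxtens_indexK /=.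
by congr (v i _ * w j _); apply: val_inj; rewrite /= ?divn1 ?modn1; case: o => -[|].
Qed.

Lemma bfE' N (A : 'M[C]_N) x y : bf A x y = \sum_i \sum_j (x i 0)^* * A i j * y j 0.
Proof. by []. Qed.

Lemma unit_tens m n (v : 'cV[C]_m) (w : 'cV[C]_n) :
  bf 1%:M v v = 1 -> bf 1%:M w w = 1 -> bf 1%:M (v *t w) (v *t w) = 1.
Proof.
rewrite !bf1E => hv hw; rewrite sum_tens -[1](mulr1 1) -{1}hv -hw mulr_suml.
apply: eq_bigr => i _; rewrite mulr_sumr; apply: eq_bigr => j _.
by rewrite tensvE normrM exprMn.
Qed.

Lemma unit_conj N (x : 'cV[C]_N) : bf 1%:M (cv x) (cv x) = bf 1%:M x x.
Proof. by rewrite !bf1E; apply: eq_bigr => i _; rewrite mxE norm_conjC. Qed.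

Lemma cv_tens m n (v : 'cV[C]_m) (w : 'cV[C]_n) : cv (v *t w) = cv v *t cv w.
Proof. by rewrite /cv map_mxT. Qed.

Lemma cvK p q (x : 'M[C]_(p, q)) : cv (cv x) = x.
Proof. by apply/matrixP => i j; rewrite !mxE conjCK. Qed.

Lemma bf_tr N (A : 'M[C]_N) z : bf A^T z z = bf A (cv z) (cv z).
Proof.
rewrite /bf exchange_big; apply: eq_bigr => i _; apply: eq_bigr => j _.
by rewrite !mxE conjCK; ring.
Qed.

Lemma bf_ptrans m n (A : 'M[C]_(m * n)) (v : 'cV[C]_m) (w : 'cV[C]_n) :
  bf (ptrans A) (v *t w) (v *t w) = bf A (v *t cv w) (v *t cv w).
Proof.
rewrite /bf sum_tens [RHS]sum_tens; apply: eq_bigr => i _.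
have E1 : forall j, \sum_(q < m * n) ((v *t w) (mxtens_index (i, j)) 0)^* *
   ptrans A (mxtens_index (i, j)) q * (v *t w) q 0 =
   \sum_(k < m) \sum_(l < n) (v i 0 * w j 0)^* * A (mxtens_index (i, l)) (mxtens_index (k, j)) * (v k 0 * w l 0).
  move=> j; rewrite sum_tens; apply: eq_bigr => k _; apply: eq_bigr => l _.
  by rewrite !tensvE mxE !mxtens_indexK.
rewrite (eq_bigr _ (fun j _ => E1 j)).
have E2 : forall j, \sum_(q < m * n) ((v *t cv w) (mxtens_index (i, j)) 0)^* *
   A (mxtens_index (i, j)) q * (v *t cv w) q 0 =
   \sum_(k < m) \sum_(l < n) (v i 0 * (w j 0)^*)^* * A (mxtens_index (i, j)) (mxtens_index (k, l)) * (v k 0 * (w l 0)^*).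
  move=> j; rewrite sum_tens; apply: eq_bigr => k _; apply: eq_bigr => l _.
  by rewrite !tensvE !mxE.
rewrite [RHS](eq_bigr _ (fun j _ => E2 j)).
rewrite exchange_big [RHS]exchange_big; apply: eq_bigr => k _.
rewrite [RHS]exchange_big; apply: eq_bigr => j _; apply: eq_bigr => l _.
rewrite !rmorphM /= conjCK; ring.
Qed.


Lemma cmx_ptrans m n (M : 'M[R]_(m * n)) : cmx (ptrans M) = ptrans (cmx M).
Proof. by apply/matrixP => i j; rewrite !mxE. Qed.
Lemma cmx_tr p (M : 'M[R]_p) : cmx M^T = (cmx M)^T.
Proof. by apply/matrixP => i j; rewrite !mxE. Qed.
Lemma cmxD p (M N : 'M[R]_p) : cmx (M + N) = cmx M + cmx N.
Proof. by apply/matrixP => i j; rewrite !mxE rmorphD. Qed.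
Lemma cmxZ p a (M : 'M[R]_p) : cmx (a *: M) = a%:C%C *: cmx M.
Proof. by apply/matrixP => i j; rewrite !mxE rmorphM. Qed.

Lemma key_W m n (B X : 'M[R]_(m * n)) (v : 'cV[C]_m) (w : 'cV[C]_n) c :
  X = 4^-1 *: (B + B^T + ptrans B + ptrans (B^T)) ->
  unit_vec v -> unit_vec w -> qform (cmx X) (v *t w) = c%:C%C -> W1i B c.
Proof.
move=> hX /unit_vecE uv /unit_vecE uw; rewrite qformE => hc.
set A := cmx B + Complex 0 1 *: cmx (ptrans B).
pose f (x : 'cV[C]_(m * n)) := bf (cmx B) x x.
have hA x : bf A x x = f x + Complex 0 1 * bf (cmx (ptrans B)) x x.
  by rewrite /A bfDA bfZA.
set z1 := v *t w; set z2 := cv v *t cv w; set z3 := v *t cv w; set z4 := cv v *t w.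
have u1 : bf 1%:M z1 z1 = 1 by apply: unit_tens.
have u2 : bf 1%:M z2 z2 = 1 by apply: unit_tens; rewrite unit_conj.
have u3 : bf 1%:M z3 z3 = 1 by apply: unit_tens; rewrite ?unit_conj.
have u4 : bf 1%:M z4 z4 = 1 by apply: unit_tens; rewrite ?unit_conj.
have p1 : bf (cmx (ptrans B)) z1 z1 = f z3 by rewrite cmx_ptrans bf_ptrans.
have p2 : bf (cmx (ptrans B)) z2 z2 = f z4 by rewrite cmx_ptrans bf_ptrans cvK.
have p3 : bf (cmx (ptrans B)) z3 z3 = f z1 by rewrite cmx_ptrans bf_ptrans cvK.
have p4 : bf (cmx (ptrans B)) z4 z4 = f z2 by rewrite cmx_ptrans bf_ptrans.
have t1 : bf (cmx B^T) z1 z1 = f z2 by rewrite cmx_tr bf_tr cv_tens.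
have t4 : bf (cmx (ptrans B^T)) z1 z1 = f z4.
  by rewrite cmx_ptrans bf_ptrans cmx_tr bf_tr cv_tens cvK.
have hc' : c%:C%C = 4^-1 * (f z1 + f z2 + f z3 + f z4).
  rewrite -hc hX cmxZ bfZA !cmxD !bfDA t1 p1 t4 -/(f z1).
  by rewrite fmorphV /= rmorph_nat.
have [y1 [uy1 hy1]] := midpoint A z1 z2 u1 u2.
have [y2 [uy2 hy2]] := midpoint A z3 z4 u3 u4.
have [z [uz hz]] := midpoint A y1 y2 uy1 uy2.
exists z; split; first by apply/unit_vecE.
rewrite qformE hz hy1 hy2 !hA p1 p2 p3 p4 hc'.
by field.
Qed.


Lemma entry_le1 N (x : 'cV[C]_N) i : bf 1%:M x x = 1 -> `|x i 0| <= 1.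
Proof.
rewrite bf1E => h; rewrite -(@expr_le1 _ 2) // -h (bigD1 i) //= lerDl.
by apply: sumr_ge0 => j _; rewrite exprn_ge0.
Qed.

Lemma bf_bound {N} (A : 'M[C]_N) x : bf 1%:M x x = 1 ->
  `|bf A x x| <= \sum_i \sum_j `|A i j|.
Proof.
move=> u; apply: le_trans (ler_norm_sum _ _ _) _; apply: ler_sum => i _.
apply: le_trans (ler_norm_sum _ _ _) _; apply: ler_sum => j _.
rewrite !normrM norm_conjC.
apply: (@le_trans _ _ (`|x i 0| * `|A i j|)).
  by rewrite ler_piMr ?mulr_ge0 // entry_le1.
by rewrite ler_piMl // entry_le1.
Qed.

Lemma normcR (c : R) : `|c%:C%C| = `|c|%:C%C :> C.
Proof. by rewrite normc_def /= expr0n addr0 sqrtr_sqr. Qed.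

Lemma norm1i : 1 <= `|1 + Complex 0 1| :> C.
Proof.
rewrite normc_def /= -[1 : C]/((1 : R)%:C%C) lecR addr0 add0r expr1n.
by rewrite -{1}sqrtr1 ler_sqrt ?lerDl // addr_ge0.
Qed.

Lemma W_bound m n (B : 'M[R]_(m * n)) : exists K, forall c, W1i B c -> `|c| <= K.
Proof.
set A := cmx B + Complex 0 1 *: cmx (ptrans B).
exists (complex.Re (\sum_i \sum_j `|A i j|)) => c [x [/unit_vecE ux hx]].
have := bf_bound A x ux; rewrite -qformE -hx normrM normcR => h.
have : `|c|%:C%C <= \sum_i \sum_j `|A i j|.
  apply: le_trans h; rewrite ler_peMr //; last exact: norm1i.
  by rewrite -normcR normr_ge0.
by rewrite lecE => /andP [_].
Qed.

Definition ev {N} (p : 'I_N) : 'cV[C]_N := \col_q ((q == p)%:R).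

Lemma ev_unit N (p : 'I_N) : bf 1%:M (ev p) (ev p) = 1.
Proof.
rewrite bf1E (bigD1 p) //= big1 ?addr0; first by rewrite mxE eqxx normr1 expr1n.
by move=> q /negbTE qp; rewrite mxE qp normr0 expr0n.
Qed.

Lemma ev_bf N (A : 'M[C]_N) p : bf A (ev p) (ev p) = A p p.
Proof.
rewrite /bf (bigD1 p) //= [X in _ + X]big1 ?addr0; last first.
  by move=> q /negbTE qp; apply: big1 => k _; rewrite !mxE qp conjC0 !mul0r.
rewrite (bigD1 p) //= [X in _ + X]big1 ?addr0; first by rewrite !mxE eqxx conjC1 mul1r mulr1.
by move=> q /negbTE qp; rewrite !mxE qp mulr0.
Qed.

Lemma ev_tens m n (i : 'I_m) (j : 'I_n) : ev i *t ev j = ev (mxtens_index (i, j)).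
Proof.
apply/matrixP => q o; case: (mxtens_indexP q) => a b.
rewrite tensvE !mxE (can_eq (@mxtens_indexK m n)) xpair_eqE.
by case: (a == i); case: (b == j); rewrite ?mulr1 ?mulr0.
Qed.

Lemma pv_nonempty m n (X : 'M[R]_(m * n)) : (0 < m)%N -> (0 < n)%N ->
  exists r, prod_values X r.
Proof.
move=> hm hn; pose i0 := Ordinal hm; pose j0 := Ordinal hn.
exists (X (mxtens_index (i0, j0)) (mxtens_index (i0, j0))).
exists (ev i0), (ev j0); split; first by apply/unit_vecE; exact: ev_unit.
split; first by apply/unit_vecE; exact: ev_unit.
by rewrite qformE ev_tens ev_bf mxE.
Qed.

End S.

Theorem corollary5p2 (R : realType) (m n : nat) (hm : (0 < m)%N) (hn : (0 < n)%N)
  (X B : 'M[R]_(m * n)) :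
  in_symtens X ->
  X = 4^-1 *: (B + B^T + ptrans B + ptrans (B^T)) ->
  W1i_min B <= muC_min X /\ muC_max X <= W1i_max B.
Proof.
move=> _ hX.
have hS : forall r, prod_values X r -> W1i B r.
  by move=> r [v [w [uv [uw hr]]]]; exact: (@key_W R m n B X v w r hX uv uw hr).
have [K hK] := @W_bound R m n B.
have hne := @pv_nonempty R m n X hm hn.
have hlb : has_lbound (W1i B).
  by exists (- K) => c /hK; rewrite ler_norml => /andP [].
have hub : has_ubound (W1i B).
  by exists K => c /hK; rewrite ler_norml => /andP [].
split.
  apply: lb_le_inf => // r Hr; exact: (ge_inf hlb (hS r Hr)).
apply: ge_sup => // r Hr; exact: (ub_le_sup hub (hS r Hr)).
Qed.
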